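(* Let $(A,+,\circ)$ be a finite left brace such that $(A,\circ)$ is a Dedekind group (every subgroup is normal), and let $(A,\cdot)$ be its decomposable associated cycle set. Suppose $A$ has a transitive cycle base, let $g$ be an element of a transitive cycle base and let $(A,\bullet)$ be the uniconnected associated cycle set $a\bullet b:=\lambda_a(g)^{-}\circ b$. Then $(A,\bullet)$ and $(A,\cdot)$ have finite multipermutation level and $mpl(A,\cdot)=mpl(A,\bullet)$. Moreover, for every $n\in\mathbb{N}$, the underlying sets of $\mathrm{Ret}^n(A,\cdot)$ and $\mathrm{Ret}^n(A,\bullet)$ coincide (as quotients of $A$).
   Context: A left brace is a set $A$ with two operations such that $(A,+)$ is an abelian group, $(A,\circ)$ is a group, and $a\circ(b+c)=a\circ b-a+a\circ c$. $\lambda_a(b):=-a+a\circ b$; $a\mapsto\lambda_a$ is a homomorphism $(A,\circ)\to\mathrm{Aut}(A,+)$. $a^{-}$ is the inverse in $(A,\circ)$. A transitive cycle base is a single $\lambda$-orbit generating $(A,+)$. A (non-degenerate) cycle set is a set $X$ with an operation such that each $\sigma_x:y\mapsto x\cdot y$ is bijective, $(x\cdot y)\cdot(x\cdot z)=(y\cdot x)\cdot(y\cdot z)$, and $x\mapsto x\cdot x$ is bijective. $\mathrm{Ret}(X)$ is the quotient of $X$ by $x\sim y\iff\sigma_x=\sigma_y$; $\mathrm{Ret}^0(X)=X$, $\mathrm{Ret}^i(X)=\mathrm{Ret}(\mathrm{Ret}^{i-1}(X))$; $mpl(X)$ is the least $n$ with $|\mathrm{Ret}^n(X)|=1$. The decomposable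 associated cycle set is $(A,\cdot)$ with $a\cdot b:=\lambda_a^{-1}(b)$. *)

(* Defs.v *)
From HB Require Import structures.
From mathcomp Require Import all_boot all_order all_algebra.
Set Implicit Arguments. Unset Strict Implicit. Unset Printing Implicit Defensive.
Import GRing.Theory.
Local Open Scope ring_scope.

Definition is_group (A : Type) (circ : A -> A -> A) (inv : A -> A) (one : A) :=
  [/\ (forall a b c, circ a (circ b c) = circ (circ a b) c),
      (forall a, circ one a = a), (forall a, circ a one = a),
      (forall a, circ (inv a) a = one) & (forall a, circ a (inv a) = one)].

Definition is_left_brace (A : zmodType) (circ : A -> A -> A) (inv : A -> A) (one : A) :=
  is_group circ inv one /\
  forall a b c : A, circ a (b + c) = circ a b - a + circ a c.

Definition lambda (A : zmodType) (circ : A -> A -> A) (a b : A) : A := - a + circ a b.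

Definition is_subgroup (A : finType) (circ : A -> A -> A) (inv : A -> A) (one : A)
  (S : {set A}) :=
  [/\ one \in S, (forall x y, x \in S -> y \in S -> circ x y \in S)
   & (forall x, x \in S -> inv x \in S)].

Definition is_dedekind (A : finType) (circ : A -> A -> A) (inv : A -> A) (one : A) :=
  forall S : {set A}, is_subgroup circ inv one S ->
    forall a s, s \in S -> circ (circ a s) (inv a) \in S.

Definition is_add_subgroup (A : finZmodType) (S : {set A}) :=
  [/\ (0 : A) \in S, (forall x y, x \in S -> y \in S -> x + y \in S)
   & (forall x, x \in S -> - x \in S)].

Definition add_generates (A : finZmodType) (X : {set A}) :=
  forall S : {set A}, is_add_subgroup S -> X \subset S -> S = setT.

Definition lambda_orbit (A : finZmodType) (circ : A -> A -> A) (g : A) : {set A} :=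
  [set lambda circ a g | a : A].

(* g belongs to a transitive cycle base: the lambda-orbit of g
   (which is the orbit containing g, as lambda_one = id) generates (A,+). *)
Definition in_transitive_cycle_base (A : finZmodType) (circ : A -> A -> A) (g : A) :=
  add_generates (lambda_orbit circ g).

(* Decomposable associated cycle set: a . b := lambda_a^{-1}(b) = lambda_{a^-}(b). *)
Definition dec_op (A : zmodType) (circ : A -> A -> A) (inv : A -> A) (a b : A) : A :=
  lambda circ (inv a) b.

Definition uni_op (A : zmodType) (circ : A -> A -> A) (inv : A -> A) (g a b : A) : A :=
  circ (inv (lambda circ a g)) b.

(* Iterated retraction, described as a quotient of X:
   ret_eq op n x y  <->  x and y have the same image in Ret^n(X, op).
   Ret^0 X = X; [x]_{n+1} = [y]_{n+1} iff sigma_[x]_n = sigma_[y]_n on Ret^n(X),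
   where the operation of Ret^n X is induced: [x]_n . [z]_n = [x . z]_n. *)
Fixpoint ret_eq (X : Type) (op : X -> X -> X) (n : nat) (x y : X) : Prop :=
  match n with
  | O => x = y
  | S m => forall z : X, ret_eq op m (op x z) (op y z)
  end.

(* |Ret^n(X)| = 1 (X nonempty) *)
Definition ret_trivial (X : Type) (op : X -> X -> X) (n : nat) : Prop :=
  forall x y : X, ret_eq op n x y.

Definition is_mpl (X : Type) (op : X -> X -> X) (n : nat) : Prop :=
  ret_trivial op n /\ forall m : nat, (m < n)%N -> ~ ret_trivial op m.

(* Main.v *)
Require Import Defs.
From mathcomp Require Import all_boot all_order all_algebra.
From Stdlib Require Import ClassicalEpsilon.
Set Implicit Arguments. Unset Strict Implicit. Unset Printing Implicit Defensive.
Import GRing.Theory.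
Local Open Scope ring_scope.

Definition pb (P : Prop) : bool := if excluded_middle_informative P then true else false.
Lemma pbP (P : Prop) : reflect P (pb P).
Proof. by rewrite /pb; case: excluded_middle_informative => h; constructor. Qed.


Lemma pigeon (T : finType) (R : T -> T -> Prop) (f : T -> T) :
  (forall x, R x x) -> (forall x y, R x y -> R y x) ->
  (forall x y z, R x y -> R y z -> R x z) ->
  (forall a b, R (f a) (f b) -> R a b) -> forall y, exists a, R (f a) y.
Proof.
move=> rf sy tr inj y.
pose Rb x := fun z => pb (R x z).
pose rep x := odflt x (pick (Rb x)).
have repP x : R x (rep x).
  rewrite /rep; case: pickP => [z /pbP //| h] /=; exact: rf.
have repE x x' : R x x' -> rep x = rep x'.
  move=> hx; have e : pick (Rb x) = pick (Rb x').
    apply: eq_pick => z; rewrite /Rb; apply/pbP/pbP => hz; eauto.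
  rewrite /rep e; case: pickP => [//|h]; exfalso.
  by have := h x'; rewrite /Rb; case: pbP => //; rewrite ?rf.
pose Im := rep @: [set: T].
pose h x := rep (f x).
have fix_rep x : x \in Im -> rep x = x.
  by case/imsetP => x0 _ ->; apply: repE; apply: sy; apply: repP.
have sub : h @: Im \subset Im.
  by apply/subsetP => _ /imsetP [x _ ->]; apply: imset_f; rewrite in_setT.
have inj_h : {in Im &, injective h}.
  move=> x1 x2 h1 h2 e; rewrite -(fix_rep _ h1) -(fix_rep _ h2); apply: repE; apply: inj.
  apply: tr (repP (f x1)) _; rewrite /h in e; rewrite e; apply: sy; exact: repP.
have eqI : h @: Im = Im.
  by apply/eqP; rewrite eqEcard sub (card_in_imset inj_h) leqnn.
have : rep y \in h @: Im by rewrite eqI; apply: imset_f; rewrite in_setT.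
case/imsetP => a _ e; exists a.
apply: tr (repP (f a)) _; rewrite /h in e; rewrite -e; apply: sy; exact: repP.
Qed.

Section Brace.
Variable A : finZmodType.
Variables (circ : A -> A -> A) (inv : A -> A) (one : A).
Hypothesis HB : is_left_brace circ inv one.


Local Notation "a *o b" := (circ a b) (at level 40, left associativity).
Local Notation lam := (lambda circ).

Lemma cA a b c : a *o (b *o c) = a *o b *o c. Proof. by case: HB => -[]. Qed.
Lemma c1l a : one *o a = a. Proof. by case: HB => -[]. Qed.
Lemma c1r a : a *o one = a. Proof. by case: HB => -[]. Qed.
Lemma cVl a : inv a *o a = one. Proof. by case: HB => -[]. Qed.
Lemma cVr a : a *o inv a = one. Proof. by case: HB => -[]. Qed.
Lemma cD a b c : a *o (b + c) = a *o b - a + a *o c. Proof. by case: HB. Qed.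

Lemma c0r a : a *o 0 = a.
Proof.
have := cD a 0 0; rewrite addr0 => h.
have : 0 = - a + a *o 0.
  by apply: (addrI (a *o 0)); rewrite addr0 {1}h addrA.
by move/eqP; rewrite eq_sym addrC subr_eq0 => /eqP.
Qed.

Lemma one0 : one = 0. Proof. by rewrite -(c0r one) c1l. Qed.

Lemma circE a b : a *o b = a + lam a b.
Proof. by rewrite /lambda addrA subrr add0r. Qed.

Lemma lamD a x y : lam a (x + y) = lam a x + lam a y.
Proof. by rewrite /lambda cD !addrA. Qed.
Lemma lam0 a : lam a 0 = 0.
Proof. by rewrite /lambda c0r addNr. Qed.
Lemma lamN a x : lam a (- x) = - lam a x.
Proof. by apply/eqP; rewrite -addr_eq0 -lamD addNr lam0. Qed.
Lemma lamB a x y : lam a (x - y) = lam a x - lam a y.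
Proof. by rewrite lamD lamN. Qed.
Lemma lam1 x : lam one x = x.
Proof. by rewrite /lambda c1l one0 oppr0 add0r. Qed.
Lemma lamM a b x : lam (a *o b) x = lam a (lam b x).
Proof.
rewrite {1}/lambda -cA [b *o x]circE cD.
by rewrite !addrA addNr add0r.
Qed.
Lemma lamVK a x : lam (inv a) (lam a x) = x.
Proof. by rewrite -lamM cVl lam1. Qed.
Lemma lamKV a x : lam a (lam (inv a) x) = x.
Proof. by rewrite -lamM cVr lam1. Qed.
Lemma invU y x : y *o x = one -> inv y = x.
Proof. by move=> h; rewrite -[RHS]c1l -(cVl y) -cA h c1r. Qed.
Lemma invK a : inv (inv a) = a.
Proof. by apply: invU; rewrite cVl. Qed.
Lemma invM a b : inv (a *o b) = inv b *o inv a.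
Proof. by apply: invU; rewrite cA -[a *o b *o inv b]cA cVr c1r cVr. Qed.
Lemma inv1 : inv one = one.
Proof. by apply: invU; rewrite c1r. Qed.

Record Inv (R : A -> A -> Prop) : Prop := MkInv {
  i_refl : forall x, R x x; i_sym : forall x y, R x y -> R y x;
  i_trans : forall x y z, R x y -> R y z -> R x z;
  i_add : forall x y z, R x y -> R (x + z) (y + z);
  i_lam : forall x y a, R x y -> R (lam a x) (lam a y);
  i_cR : forall x y z, R x y -> R (x *o z) (y *o z) }.

Definition Tset (R : A -> A -> Prop) c := forall z, R (lam c z) z.
Definition Qrel (R : A -> A -> Prop) x y := forall z, R (lam x z) (lam y z).

Section InvR.
Variable R : A -> A -> Prop.
Hypothesis HR : Inv R.

Lemma Rrefl x : R x x. Proof. exact: i_refl. Qed.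
Lemma Rsym x y : R x y -> R y x. Proof. exact: i_sym. Qed.
Lemma Rtrans x y z : R x y -> R y z -> R x z. Proof. exact: i_trans. Qed.
Lemma RaddR x y z : R x y -> R (x + z) (y + z). Proof. exact: i_add. Qed.
Lemma Rlam x y a : R x y -> R (lam a x) (lam a y). Proof. exact: i_lam. Qed.
Lemma RcR x y z : R x y -> R (x *o z) (y *o z). Proof. exact: i_cR. Qed.

Lemma RaddL x y z : R x y -> R (z + x) (z + y).
Proof. by rewrite ![z + _]addrC; apply: RaddR. Qed.
Lemma Radd x y u v : R x y -> R u v -> R (x + u) (y + v).
Proof. move=> h1 h2; apply: Rtrans (RaddR u h1) _; exact: RaddL. Qed.
Lemma Ropp x y : R x y -> R (- x) (- y).
Proof.
move=> h; have := RaddR (- x - y) h.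
rewrite addrA subrr add0r addrCA subrr addr0 => h'; exact: Rsym.
Qed.
Lemma RcL x y z : R x y -> R (z *o x) (z *o y).
Proof. by move=> h; rewrite !circE; apply: RaddL; apply: Rlam. Qed.
Lemma Rlamc x y z : R x y -> R (lam x z) (lam y z).
Proof. by move=> h; rewrite /lambda; apply: Radd; [apply: Ropp|apply: RcR]. Qed.
Lemma Rinv a b : R a b -> R (inv a) (inv b).
Proof.
move=> h; have h1 := RcL (inv a) h; rewrite cVl in h1.
have h2 := RcR (inv b) h1; rewrite c1l -cA cVr c1r in h2; exact: Rsym.
Qed.
Lemma Rinv_iff a b : R (inv a) (inv b) <-> R a b.
Proof. by split => [/Rinv|/Rinv //]; rewrite !invK. Qed.
Lemma Rlam_iff x y a : R (lam a x) (lam a y) <-> R x y.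
Proof. by split => [/(Rlam (inv a))|/Rlam //]; rewrite !lamVK. Qed.

Lemma T1 : Tset R one. Proof. by move=> z; rewrite lam1; apply: Rrefl. Qed.
Lemma TM c d : Tset R c -> Tset R d -> Tset R (c *o d).
Proof. by move=> hc hd z; rewrite lamM; apply: Rtrans (hc z); apply: Rlam. Qed.
Lemma TV c : Tset R c -> Tset R (inv c).
Proof. by move=> hc z; apply: Rsym; have := hc (lam (inv c) z); rewrite lamKV. Qed.
Lemma Tconj a c : Tset R c -> Tset R (a *o c *o inv a).
Proof.
move=> hc z; rewrite !lamM; apply: Rtrans (Rlam a (hc _)) _; rewrite lamKV; exact: Rrefl.
Qed.
Lemma TclosedR u d : Tset R d -> R u d -> Tset R u.
Proof. by move=> hd h z; apply: Rtrans (hd z); apply: Rlamc. Qed.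
Lemma Tlam a c : Tset R c -> Tset R (lam a c).
Proof.
move=> hc; set d := a *o c *o inv a.
have hd : Tset R d by apply: Tconj.
have e : a *o c = d *o a by rewrite /d -cA cVl c1r.
have e2 : lam a c = - a + (d + lam d a) by rewrite {1}/lambda e circE.
apply: (TclosedR hd); rewrite e2.
have h3 : R (- a + (d + lam d a)) (- a + (d + a)) by apply: RaddL; apply: RaddL; apply: hd.
by apply: Rtrans h3 _; rewrite addrCA addNr addr0; apply: Rrefl.
Qed.
Lemma Tlam_iff a c : Tset R (lam a c) <-> Tset R c.
Proof. by split => [/(Tlam (inv a))|/Tlam //]; rewrite lamVK. Qed.

Lemma Q_T x y : Qrel R x y <-> Tset R (inv y *o x).
Proof.
split=> h z.
  by rewrite lamM -(Rlam_iff _ _ y) lamKV; apply: h.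
by rewrite -(Rlam_iff _ _ (inv y)) lamVK -lamM; apply: h.
Qed.
Lemma Q_diff x y : Qrel R x y <-> Tset R (x - y).
Proof.
have e : x - y = lam y (inv y *o x).
  by rewrite /lambda cA cVr c1l addrC.
by rewrite Q_T e Tlam_iff.
Qed.

Lemma InvQ : Inv (Qrel R).
Proof.
split.
- by move=> x z; apply: Rrefl.
- by move=> x y h z; apply: Rsym.
- by move=> x y z h1 h2 w; apply: Rtrans (h1 w) (h2 w).
- by move=> x y z; rewrite !Q_diff opprD addrACA subrr addr0.
- by move=> x y a; rewrite !Q_diff -lamB; apply: Tlam.
- move=> x y z; rewrite !Q_T invM => h.
  have := Tconj (inv z) h; rewrite invK.
  by rewrite !cA.
Qed.

Lemma R_Q x y : R x y -> Qrel R x y.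
Proof. by move=> h z; apply: Rlamc. Qed.

Lemma Qinv x y : (forall z, R (lam (inv x) z) (lam (inv y) z)) <-> Qrel R x y.
Proof.
split=> h w.
  have := h (lam x w); rewrite lamVK -(Rlam_iff _ _ y) lamKV => h'; exact: Rsym.
have := h (lam (inv x) w); rewrite lamKV -(Rlam_iff _ _ (inv y)) lamVK => h'; exact: Rsym.
Qed.

End InvR.

Lemma Inv_ext (R R' : A -> A -> Prop) : (forall x y, R x y <-> R' x y) -> Inv R -> Inv R'.
Proof.
move=> e [h1 h2 h3 h4 h5 h6]; split.
- by move=> x; apply/e.
- by move=> x y /e /h2 /e.
- by move=> x y z /e h /e h'; apply/e; apply: h3 h h'.
- by move=> x y z /e /h4 /e.
- by move=> x y a /e /h5 /e.
- by move=> x y z /e /h6 /e.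
Qed.

Lemma Inv_eq : Inv (fun x y => x = y).
Proof. by split=> *; subst. Qed.


Hypothesis HD : is_dedekind circ inv one.
Variable g : A.
Hypothesis HT : in_transitive_cycle_base circ g.

Lemma S_T R : Inv R -> forall c, R (lam c g) g -> Tset R c.
Proof.
move=> HR c Sc.
pose Ss := [set c | pb (R (lam c g) g)].
have sub : is_subgroup circ inv one Ss.
  split.
  - by rewrite inE; apply/pbP; rewrite lam1; apply: Rrefl.
  - move=> x y; rewrite !inE => /pbP hx /pbP hy; apply/pbP.
    rewrite lamM; apply: (Rtrans HR (Rlam HR x hy) hx).
  - move=> x; rewrite !inE => /pbP hx; apply/pbP.
    have := Rlam HR (inv x) hx; rewrite lamVK => h; exact: Rsym.
pose Z := [set z | pb (forall c, R (lam c g) g -> R (lam c z) z)].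
have addZ : is_add_subgroup Z.
  split.
  - by rewrite inE; apply/pbP => c' _; rewrite lam0; apply: Rrefl.
  - move=> x y; rewrite !inE => /pbP hx /pbP hy; apply/pbP => c' hc.
    by rewrite lamD; exact: (Radd HR (hx c' hc) (hy c' hc)).
  - move=> x; rewrite !inE => /pbP hx; apply/pbP => c' hc.
    by rewrite lamN; exact: (Ropp HR (hx c' hc)).
have orb : lambda_orbit circ g \subset Z.
  apply/subsetP => _ /imsetP [d _ ->]; rewrite inE; apply/pbP => c' hc.
  have he : inv d *o c' *o d \in Ss.
    have := HD sub (inv d) (s := c'); rewrite invK; apply; rewrite inE; exact/pbP.
  move: he; rewrite inE => /pbP he.
  have -> : lam c' (lam d g) = lam d (lam (inv d *o c' *o d) g).
    by rewrite -!lamM !cA cVr c1l.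
  exact: (Rlam HR d he).
have ZT := HT addZ orb.
move=> z; have : z \in Z by rewrite ZT inE.
by rewrite inE => /pbP; apply.
Qed.

Local Notation dec := (dec_op circ inv).
Local Notation uni := (uni_op circ inv g).

Lemma step (R U : A -> A -> Prop) : Inv R -> (forall x y, R x y <-> U x y) ->
  (forall x y, (forall z, R (dec x z) (dec y z)) <-> Qrel R x y) /\
  (forall x y, (forall z, U (uni x z) (uni y z)) <-> Qrel R x y).
Proof.
move=> HR e; split=> x y; first exact: Qinv.
rewrite /uni_op.
transitivity (R (inv (lam x g)) (inv (lam y g))).
  split=> h.
    by have := h one; rewrite !c1r => /e.
  by move=> z; apply/e; apply: RcR.
rewrite (Rinv_iff HR) -(Rlam_iff HR _ _ (inv y)) lamVK -lamM Q_T //.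
split; [exact: S_T | by move=> h; apply: h].
Qed.

Lemma all_n n : Inv (ret_eq dec n) /\ forall x y, ret_eq dec n x y <-> ret_eq uni n x y.
Proof.
elim: n => [|n [HR e]]; first by split; [exact: Inv_eq | by []].
have [s1 s2] := step HR e.
split; last by move=> x y /=; rewrite s1 s2.
apply: (Inv_ext (R := Qrel (ret_eq dec n))); first by move=> x y /=; rewrite s1.
exact: InvQ.
Qed.

Lemma Rmono n x y : ret_eq dec n x y -> ret_eq dec n.+1 x y.
Proof.
have [HR e] := all_n n; have [s1 _] := step HR e.
by move=> h /=; apply/s1; apply: R_Q.
Qed.

Lemma stab : exists N, forall x y, ret_eq dec N.+1 x y -> ret_eq dec N x y.
Proof.
pose setn n := [set p : A * A | pb (ret_eq dec n p.1 p.2)].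
pose cnt n := #|setn n|.
have sub n : setn n \subset setn n.+1.
  by apply/subsetP => p; rewrite !inE => /pbP /Rmono /pbP.
pose K := #|{: A * A}|.+1.
case: (boolP [exists m : 'I_K, (cnt m.+1 <= cnt m)%N]).
  case/existsP => m hm; exists m => x y h.
  have eq : setn m = setn m.+1 by apply/eqP; rewrite eqEcard sub hm.
  have : (x, y) \in setn m.+1 by rewrite inE; apply/pbP.
  by rewrite -eq inE => /pbP.
rewrite negb_exists => /forallP hall.
have hk : forall k, (k <= K -> k <= cnt k)%N.
  elim=> // k IH hk.
  have := hall (Ordinal hk); rewrite -ltnNge => hlt.
  exact: leq_ltn_trans (IH (ltnW hk)) hlt.
have := hk K (leqnn K); rewrite /cnt.
by have := max_card (mem (setn K)); rewrite /K => h1 h2; have := leq_trans h2 h1; rewrite ltnn.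
Qed.

Lemma triv N : (forall x y, ret_eq dec N.+1 x y -> ret_eq dec N x y) ->
  forall x y, ret_eq dec N x y.
Proof.
move=> hN; have [HR e] := all_n N; have [s1 _] := step HR e.
set R := ret_eq dec N in HR hN s1 *.
have eqQ x y : Qrel R x y -> R x y by move=> h; apply: hN => /=; apply/s1.
have inj a b : R (lam a g) (lam b g) -> R a b.
  rewrite -(Rlam_iff HR _ _ (inv b)) lamVK -lamM => h.
  by apply: eqQ; apply/Q_T => //; apply: S_T.
have [a ha] := pigeon (Rrefl HR) (Rsym HR) (Rtrans HR) inj 0.
have hg : R g 0.
  by have := Rlam HR (inv a) ha; rewrite lamVK lam0.
pose I := [set z | pb (R z 0)].
have addI : is_add_subgroup I.
  split.
  - by rewrite inE; apply/pbP; apply: Rrefl.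
  - move=> x y; rewrite !inE => /pbP hx /pbP hy; apply/pbP.
    by rewrite -(addr0 0); apply: Radd.
  - move=> x; rewrite !inE => /pbP hx; apply/pbP.
    by rewrite -oppr0; apply: Ropp.
have orb : lambda_orbit circ g \subset I.
  apply/subsetP => _ /imsetP [d _ ->]; rewrite inE; apply/pbP.
  by have := Rlam HR d hg; rewrite lam0.
have IT := HT addI orb.
have hz z : R z 0.
  have : z \in I by rewrite IT inE.
  by rewrite inE => /pbP.
move=> x y; exact: (Rtrans HR (hz x) (Rsym HR (hz y))).
Qed.

Lemma main_sec :
  (exists n : nat, is_mpl dec n /\ is_mpl uni n) /\
  (forall (n : nat) (x y : A), ret_eq dec n x y <-> ret_eq uni n x y).
Proof.
split; last by move=> n; case: (all_n n).
have ex : exists n, pb (ret_trivial dec n).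
  by have [N hN] := stab; exists N; apply/pbP; apply: triv.
case: (ex_minnP ex) => n /pbP hn hmin.
exists n; split; split.
- exact: hn.
- move=> m hm ht; have := hmin m (introT (pbP _) ht); by rewrite leqNgt hm.
- by move=> x y; apply/(proj2 (all_n n)); apply: hn.
- move=> m hm ht; have ht' : ret_trivial dec m.
    by move=> x y; apply/(proj2 (all_n m)); apply: ht.
  by have := hmin m (introT (pbP _) ht'); rewrite leqNgt hm.
Qed.

End Brace.

Theorem mainTheorem6 (A : finZmodType) (circ : A -> A -> A) (inv : A -> A) (one : A)
  (g : A) :
  is_left_brace circ inv one ->
  is_dedekind circ inv one ->
  in_transitive_cycle_base circ g ->
  (exists n : nat, is_mpl (dec_op circ inv) n /\ is_mpl (uni_op circ inv g) n) /\
  (forall (n : nat) (x y : A),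
     ret_eq (dec_op circ inv) n x y <-> ret_eq (uni_op circ inv g) n x y).
Proof. move=> HB HD HT; exact: (main_sec HB HD HT). Qed.
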